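(* Let $t\ge 3$, let $\Gamma$ be a maximal triangle-free graph on vertex set $\{z_1,\dots,z_t\}$, and let $a,b$ be positive integers. Then the graph $\Gamma[a,b]$ has no triangle-free homomorphic image with fewer than $t$ vertices.
   Context: $M_{t,t}$ is the bipartite graph on $\{x_i,y_i\}_{i\in[t]}$ with $x_iy_j\in E$ iff $i\ne j$ (complete bipartite $K_{t,t}$ minus a perfect matching). $M_{t,t}\vee\Gamma$ is the disjoint union of $M_{t,t}$ and $\Gamma$ together with the edges $x_iz_i$ and $y_iz_i$ for all $i\in[t]$. $\Gamma[a,b]$ is obtained from $M_{t,t}\vee\Gamma$ by replacing each vertex of $M_{t,t}$ by an independent set of $a$ copies and each vertex of $\Gamma$ by an independent set of $b$ copies, each edge becoming a complete bipartite graph between the corresponding sets. A triangle-free homomorphic image of $G$ is a triangle-free graph $F$ with a map $V(G)\to V(F)$ sending edges to edges. *)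

(* Defs.v *)
From mathcomp Require Import all_boot.
Set Implicit Arguments. Unset Strict Implicit. Unset Printing Implicit Defensive.

Definition simple_graph (T : finType) (e : rel T) : Prop :=
  symmetric e /\ irreflexive e.

Definition triangle_free (T : finType) (e : rel T) : Prop :=
  forall u v w : T, ~~ [&& e u v, e v w & e u w].

(* Maximal triangle-free: triangle-free, and adding any non-edge uv
   (u <> v) creates a triangle, i.e. u and v have a common neighbour. *)
Definition maximal_triangle_free (T : finType) (e : rel T) : Prop :=
  simple_graph e /\ triangle_free e /\
  forall u v : T, u != v -> ~~ e u v -> exists w, e u w && e w v.

(* Vertices of Gamma[a,b]:
   inl (i, false, k) = k-th copy of x_i,  inl (i, true, k) = k-th copy of y_i
   (k < a);  inr (i, k) = k-th copy of z_i (k < b). *)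
Definition blowup_vertex (t a b : nat) : finType :=
  (('I_t * bool * 'I_a) + ('I_t * 'I_b))%type.

(* Adjacency in the base graph M_{t,t} \vee Gamma on the labels. *)
Definition base_adj (t : nat) (G : rel 'I_t)
  (p q : ('I_t * bool) + 'I_t) : bool :=
  match p, q with
  | inl (i, s), inl (j, s') => (s != s') && (i != j)
  | inl (i, _), inr j => i == j
  | inr i, inl (j, _) => i == j
  | inr i, inr j => G i j
  end.

Definition blowup_label (t a b : nat) (v : blowup_vertex t a b)
  : ('I_t * bool) + 'I_t :=
  match v with
  | inl (i, s, _) => inl (i, s)
  | inr (i, _) => inr i
  end.

Arguments base_adj : clear implicits.
Definition blowup_adj (t : nat) (G : rel 'I_t) (a b : nat)
  : rel (blowup_vertex t a b) :=
  fun u v => base_adj t G (blowup_label u) (blowup_label v).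
Arguments blowup_adj : clear implicits.

Definition graph_hom (T U : finType) (e : rel T) (e' : rel U) (f : T -> U)
  : Prop := forall u v, e u v -> e' (f u) (f v).

(* Main.v *)
Require Import Defs.
From mathcomp Require Import all_boot.

Theorem proposition3p3 (t : nat) (G : rel 'I_t) (a b : nat) :
  3 <= t -> maximal_triangle_free G -> 0 < a -> 0 < b ->
  forall (n : nat) (F : rel 'I_n) (f : blowup_vertex t a b -> 'I_n),
    n < t -> simple_graph F -> triangle_free F ->
    ~ graph_hom (blowup_adj t G a b) F f.
Proof.
move=> _ _ Ha Hb n F f Hn _ Htf Hhom.
pose ka : 'I_a := Ordinal Ha.
pose kb : 'I_b := Ordinal Hb.
pose g := fun m : 'I_t => f (inr (m, kb)).
have inj : injective g.
  move=> m m' Heq; apply/eqP; apply/negPn/negP => Hne.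
  have e1 : F (g m) (f (inl (m', false, ka))).
    rewrite Heq; apply: Hhom; by rewrite /blowup_adj /= eqxx.
  have e2 : F (f (inl (m', false, ka))) (f (inl (m, true, ka))).
    apply: Hhom; by rewrite /blowup_adj /= eq_sym Hne.
  have e3 : F (g m) (f (inl (m, true, ka))).
    apply: Hhom; by rewrite /blowup_adj /= eqxx.
  by move: (Htf (g m) (f (inl (m', false, ka))) (f (inl (m, true, ka))));
    rewrite e1 e2 e3.
have := leq_card g inj.
by rewrite !card_ord leqNgt Hn.
Qed.
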